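(* Let $G$ be an $H(4,3)$-free graph and $u^*\in V(G)$. Put $N=N(u^* )$, $W=V(G)\setminus N[u^*]$, and $A^{+}=\{v\in N: v \text{ has at least one neighbor in } N\}$. Assume that the induced subgraph $G[A^{+}]$ is isomorphic to $K_4$. Let \[ U:=\{w\in W: w \text{ has exactly one neighbor in } A^{+}\}. \] Then $U$ is an independent set in $G$ (equivalently, in $G[W]$).
   Context: $H(4,3)$ is the graph obtained from a $4$-cycle and a triangle by identifying one vertex of the $4$-cycle with one vertex of the triangle; $H(4,3)$-free means containing no subgraph (not necessarily induced) isomorphic to $H(4,3)$. $N(u^* )$ is the open neighborhood of $u^*$ and $N[u^*]=N(u^* )\cup\{u^*\}$. *)

(* Defs.v *)
From mathcomp Require Import all_boot.
Set Implicit Arguments. Unset Strict Implicit. Unset Printing Implicit Defensive.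

Definition simple_graph (T : finType) (e : rel T) : Prop :=
  symmetric e /\ irreflexive e.

(* H(4,3): 4-cycle a-b-c-d-a and triangle a-x-y sharing vertex a (6 distinct vertices).
   G contains H(4,3) as a (not necessarily induced) subgraph. *)
Definition contains_H43 (T : finType) (e : rel T) : Prop :=
  exists a b c d x y : T,
    [&& uniq [:: a; b; c; d; x; y],
        e a b, e b c, e c d, e d a,
        e a x, e x y & e y a].

Definition H43_free (T : finType) (e : rel T) : Prop := ~ contains_H43 e.

Definition nbhd (T : finType) (e : rel T) (u : T) : {set T} := [set v | e u v].

Definition cnbhd (T : finType) (e : rel T) (u : T) : {set T} := u |: nbhd e u.

Definition induced_K4 (T : finType) (e : rel T) (S : {set T}) : Prop :=
  #|S| = 4 /\ {in S &, forall u v, u != v -> e u v}.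

Definition independent (T : finType) (e : rel T) (S : {set T}) : Prop :=
  {in S &, forall u v, ~~ e u v}.

(* Main.v *)
Require Import Defs.
From mathcomp Require Import all_boot.
From mathcomp Require Import zify.

Lemma two_avoid (T : finType) (S : {set T}) (x y : T) :
  #|S| = 4 -> exists b c, [/\ b \in S, c \in S, b != c & [/\ b != x, b != y, c != x & c != y]].
Proof.
move=> hS.
have h : 1 < #|S :\ x :\ y|.
  have h1 := cardsD1 x S. have h2 := cardsD1 y (S :\ x).
  rewrite hS in h1. case: (x \in S) h1 => /=; case: (y \in S :\ x) h2 => /=; lia.
case/card_gt1P: h => b [c [hb hc bc]].
move: hb hc; rewrite !inE => /and3P[hby bx bS] /and3P[cy cx cS].
by exists b, c.
Qed.

Theorem lemma4p2 (T : finType) (e : rel T) (ustar : T) :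
  simple_graph e -> H43_free e ->
  let N := nbhd e ustar in
  let W := ~: cnbhd e ustar in
  let Aplus := [set v in N | [exists w in N, e v w]] in
  induced_K4 e Aplus ->
  let U := [set w in W | #|[set a in Aplus | e w a]| == 1] in
  independent e U.
Proof.
move=> [sym irr] free N W Aplus [card4 K4] U w1 w2.
have inA : forall v, v \in Aplus -> e ustar v.
  by move=> v; rewrite !inE => /andP[].
have inU : forall w, w \in U -> [/\ w != ustar, ~~ e ustar w & exists a, a \in Aplus /\ e w a].
  move=> w; rewrite !inE negb_or => /andP[/andP[h1 h2] /cards1P[a ha]].
  split => //; exists a.
  have : a \in [set a0 in Aplus | e w a0] by rewrite ha inE.
  by rewrite inE => /andP[].
move=> /inU [w1u w1n [a1 [a1A ea1]]] /inU [w2u w2n [a2 [a2A ea2]]].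
apply/negP => e12.
have w12 : w1 != w2 by apply/negP => /eqP E; subst; rewrite irr in e12.
have nA : forall v w, v \in Aplus -> ~~ e ustar w -> v != w.
  by move=> v w hv hw; apply/negP => /eqP E; subst; rewrite inA in hw.
have nU : forall v, v \in Aplus -> v != ustar.
  by move=> v hv; apply/negP => /eqP E; subst; have := inA _ hv; rewrite irr.
apply: free.
case: (eqVneq a1 a2) => [E | a12].
- subst a2.
  have [b [c [bA cA bc [ba1 _ ca1 _]]]] := @two_avoid _ _ a1 a1 card4.
  exists a1, b, ustar, c, w1, w2.
  have := nA _ _ a1A w1n; have := nA _ _ a1A w2n; have := nA _ _ bA w1n;
  have := nA _ _ bA w2n; have := nA _ _ cA w1n; have := nA _ _ cA w2n;
  have := nU _ a1A; have := nU _ bA; have := nU _ cA.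
  move=> *.
  rewrite /= !inE !negb_or.
  rewrite (K4 _ _ a1A bA) ?(eq_sym a1) // sym (inA _ bA) (inA _ cA).
  rewrite (K4 _ _ cA a1A) // sym ea1 e12 /= ?(sym w2) ?ea2.
  by rewrite !andbT sym ea2; repeat (apply/andP; split); try done; rewrite eq_sym.
- have [b [c [bA cA bc [ba1 ba2 ca1 ca2]]]] := @two_avoid _ _ a1 a2 card4.
  exists a1, w1, w2, a2, b, c.
  have := nA _ _ a1A w1n; have := nA _ _ a1A w2n; have := nA _ _ bA w1n;
  have := nA _ _ bA w2n; have := nA _ _ cA w1n; have := nA _ _ cA w2n;
  have := nA _ _ a2A w1n; have := nA _ _ a2A w2n.
  move=> *.
  rewrite /= !inE !negb_or.
  rewrite sym ea1 e12 ea2 (K4 _ _ a2A a1A) ?(eq_sym a2) //.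
  rewrite (K4 _ _ a1A bA) ?(eq_sym a1) // (K4 _ _ bA cA) // (K4 _ _ cA a1A) //.
  by rewrite !andbT; repeat (apply/andP; split); rewrite // eq_sym.
Qed.
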